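(* Let $Y$ be a real symmetric log-concave random variable, $p\geq 2$ and $V>0$ with $\|Y\|_p\geq V$. Then $\mathbb{E}(|Y|\wedge V)^p\geq (V/12)^p$.
   Context: $\|Y\|_p:=(\mathbb{E}|Y|^p)^{1/p}$; $a\wedge b=\min\{a,b\}$. A real random variable is log-concave if its law $\mu$ satisfies $\mu(\lambda K+(1-\lambda)L)\geq\mu(K)^\lambda\mu(L)^{1-\lambda}$ for all nonempty compact $K,L\subset\mathbb{R}$ and $\lambda\in[0,1]$; symmetric means $Y$ and $-Y$ have the same law. *)

(* Defs.v *)
From Stdlib Require Import Reals Lra Rtopology.
Open Scope R_scope.

Definition sigma_algebra (S : (R -> Prop) -> Prop) : Prop :=
  S (fun _ => True) /\
  (forall A, S A -> S (fun x => ~ A x)) /\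
  (forall A : nat -> R -> Prop, (forall n, S (A n)) -> S (fun x => exists n, A n x)).

Definition borel (A : R -> Prop) : Prop :=
  forall S, sigma_algebra S -> (forall a b, S (fun x => a < x < b)) -> S A.

(* A Borel probability measure on R (the law of a real random variable). *)
Definition is_prob_measure (mu : (R -> Prop) -> R) : Prop :=
  (forall A, borel A -> 0 <= mu A) /\
  mu (fun _ => True) = 1 /\
  (forall A : nat -> R -> Prop,
     (forall n, borel (A n)) ->
     (forall n m x, n <> m -> A n x -> A m x -> False) ->
     infinite_sum (fun n => mu (A n)) (mu (fun x => exists n, A n x))).

Definition rpow (a lam : R) : R :=
  if Rlt_dec 0 a then Rpower a lam else if Req_EM_T lam 0 then 1 else 0.

Definition powp (x p : R) : R :=
  if Rlt_dec 0 x then Rpower x p else 0.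

Definition mink (lam : R) (K L : R -> Prop) : R -> Prop :=
  fun z => exists x y, K x /\ L y /\ z = lam * x + (1 - lam) * y.

Definition log_concave (mu : (R -> Prop) -> R) : Prop :=
  forall (K L : R -> Prop) (lam : R),
    compact K -> compact L -> (exists x, K x) -> (exists y, L y) ->
    0 <= lam <= 1 ->
    mu (mink lam K L) >= rpow (mu K) lam * rpow (mu L) (1 - lam).

Definition symmetric (mu : (R -> Prop) -> R) : Prop :=
  forall A, borel A -> mu (fun x => A (- x)) = mu A.

(* For a nonnegative (Borel) function g, "E g(Y) >= c" where Y ~ mu,
   with E g(Y) computed by the layer-cake formula
   E g(Y) = \int_0^\infty mu{g > t} dt  (possibly +infinity),
   i.e. the supremum over T of the Riemann integrals over [0,T]
   (the integrand is monotone, hence Riemann integrable). *)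
Definition expect_ge (mu : (R -> Prop) -> R) (g : R -> R) (c : R) : Prop :=
  forall c', c' < c ->
    exists (T : R) (pr : Riemann_integrable (fun t => mu (fun y => t < g y)) 0 T),
      0 <= T /\ c' < RiemannInt pr.

(* Main.v *)
Require Import Defs.
From Stdlib Require Import Reals Rtopology.
From Stdlib Require Import Lra Lia RList ZArith Classical FunctionalExtensionality PropExtensionality.
Open Scope R_scope.
Set Implicit Arguments.

Lemma set_ext (A B : R -> Prop) : (forall x, A x <-> B x) -> A = B.
Proof. intros H. apply functional_extensionality. intros x. apply propositional_extensionality. apply H. Qed.

Lemma borel_T : borel (fun _ => True).
Proof. intros S [H _] _. exact H. Qed.

Lemma borel_C A : borel A -> borel (fun x => ~ A x).
Proof. intros HA S HS Hi. destruct HS as [H1 [H2 H3]]. apply H2. apply HA; [split; auto|exact Hi]. Qed.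

Lemma borel_U (A : nat -> R -> Prop) : (forall n, borel (A n)) -> borel (fun x => exists n, A n x).
Proof. intros HA S HS Hi. pose proof HS as [H1 [H2 H3]]. apply H3. intros n. apply HA; auto. Qed.

Lemma borel_ext A B : borel A -> (forall x, A x <-> B x) -> borel B.
Proof. intros HA H. rewrite <- (@set_ext A B H). exact HA. Qed.

Lemma borel_F : borel (fun _ => False).
Proof. apply borel_ext with (fun x => ~ True). apply borel_C, borel_T. tauto. Qed.

Definition seq2 (A B : R -> Prop) (n : nat) : R -> Prop :=
  match n with 0 => A | 1 => B | _ => fun _ => False end.

Lemma borel_or A B : borel A -> borel B -> borel (fun x => A x \/ B x).
Proof.
  intros HA HB. apply borel_ext with (fun x => exists n, seq2 A B n x).
  - apply borel_U. intros [|[|n]]; simpl; auto. apply borel_F.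
  - intros x; split.
    + intros [[|[|n]] H]; simpl in H; tauto.
    + intros [H|H]; [exists 0%nat|exists 1%nat]; exact H.
Qed.

Lemma borel_and A B : borel A -> borel B -> borel (fun x => A x /\ B x).
Proof.
  intros HA HB. apply borel_ext with (fun x => ~ (~ A x \/ ~ B x)).
  - apply borel_C, borel_or; apply borel_C; auto.
  - intros x; split; [|tauto]. intros H. split; apply NNPP; tauto.
Qed.

Lemma borel_oi a b : borel (fun x => a < x < b).
Proof. intros S HS Hi. apply Hi. Qed.

Lemma floor_ex (m : nat) : forall x, 0 <= x < INR m -> exists k : nat, INR k <= x < INR k + 1.
Proof.
  induction m as [|m IH]; intros x Hx.
  - simpl in Hx. lra.
  - rewrite S_INR in Hx. destruct (Rlt_le_dec x (INR m)).
    + apply IH. lra.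
    + exists m. lra.
Qed.

Lemma nat_big (x : R) : {n : nat | x < INR n}.
Proof.
  exists (Z.to_nat (up x)). destruct (archimed x) as [H1 _].
  rewrite INR_IZR_INZ. revert H1. generalize (up x). intros z Hz.
  destruct z as [|p|p]; simpl.
  - exact Hz.
  - rewrite positive_nat_Z. exact Hz.
  - apply Rlt_trans with (IZR (Z.neg p)); auto. apply IZR_lt. lia.
Qed.

Lemma borel_gt a : borel (fun x => a < x).
Proof.
  apply borel_ext with (fun x => exists n, (fun n x => a < x < a + INR n + 1) n x).
  - apply borel_U. intros n. apply borel_oi.
  - intros x; split.
    + intros [n Hn]; lra.
    + intros H. destruct (nat_big (x - a)) as [n Hn]. exists n. lra.
Qed.

Lemma borel_lt b : borel (fun x => x < b).
Proof.
  apply borel_ext with (fun x => exists n, (fun n x => b - INR n - 1 < x < b) n x).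
  - apply borel_U. intros n. apply borel_oi.
  - intros x; split.
    + intros [n Hn]; lra.
    + intros H. destruct (nat_big (b - x)) as [n Hn]. exists n. lra.
Qed.

Lemma borel_ge a : borel (fun x => a <= x).
Proof.
  apply borel_ext with (fun x => ~ (x < a)). apply borel_C, borel_lt.
  intros x; split; intros; lra.
Qed.

Lemma borel_le b : borel (fun x => x <= b).
Proof.
  apply borel_ext with (fun x => ~ (b < x)). apply borel_C, borel_gt.
  intros x; split; intros; lra.
Qed.

Lemma borel_cc a b : borel (fun x => a <= x <= b).
Proof. apply borel_and; [apply borel_ge|apply borel_le]. Qed.

Lemma borel_abs_up (P : R -> Prop) :
  (forall x x', 0 <= x <= x' -> P x -> P x') -> borel (fun y => P (Rabs y)).
Proof.
  intros Hup.
  destruct (classic (exists x0, 0 <= x0 /\ P x0)) as [[x0 [Hx0 Px0]] | Hno].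
  2:{ apply borel_ext with (fun _ => False). apply borel_F.
      intros y; split; [tauto|]. intros H. apply Hno. exists (Rabs y). split; auto. apply Rabs_pos. }
  destruct (classic (exists c, 0 <= c /\ ~ P c)) as [[c0 [Hc0 Pc0]] | Hall].
  2:{ apply borel_ext with (fun _ => True). apply borel_T.
      intros y; split; [|tauto]. intros _. apply NNPP. intros H. apply Hall.
      exists (Rabs y). split; auto. apply Rabs_pos. }
  destruct (completeness (fun c => 0 <= c /\ ~ P c)) as [r [Hub Hlub]].
  { exists x0. intros c [Hc Pc]. destruct (Rle_dec c x0); auto.
    exfalso. apply Pc. apply (Hup x0); auto. lra. }
  { exists c0. auto. }
  assert (Hr0 : 0 <= r) by (apply Rle_trans with c0; auto; apply Hub; auto).
  assert (Hi : forall u, 0 <= u -> r < u -> P u).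
  { intros u Hu Hru. apply NNPP. intros Pu. assert (u <= r) by (apply Hub; auto). lra. }
  assert (Hii : forall u, 0 <= u -> u < r -> ~ P u).
  { intros u Hu Hur Pu. assert (r <= u). { apply Hlub. intros c [Hc Pc].
      destruct (Rle_dec c u); auto. exfalso. apply Pc. apply (Hup u); auto. lra. }
    lra. }
  destruct (classic (P r)) as [Pr|Pr].
  - apply borel_ext with (fun y => r <= y \/ y <= - r).
    + apply borel_or; [apply borel_ge|apply borel_le].
    + intros y. pose proof (Rabs_pos y) as Hay. split.
      * intros H. apply (Hup r); auto. split; auto. unfold Rabs in *; destruct Rcase_abs; lra.
      * intros H. destruct (Rlt_le_dec (Rabs y) r) as [Hl|Hl].
        -- exfalso. exact (Hii _ (Rabs_pos y) Hl H).
        -- unfold Rabs in *; destruct Rcase_abs; lra.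
  - apply borel_ext with (fun y => r < y \/ y < - r).
    + apply borel_or; [apply borel_gt|apply borel_lt].
    + intros y. pose proof (Rabs_pos y) as Hay. split.
      * intros H. apply Hi; auto. unfold Rabs in *; destruct Rcase_abs; lra.
      * intros H. destruct (Rtotal_order (Rabs y) r) as [Hl|[He|Hl]].
        -- exfalso. exact (Hii _ (Rabs_pos y) Hl H).
        -- rewrite He in H. contradiction.
        -- unfold Rabs in *; destruct Rcase_abs; lra.
Qed.

Section Meas.
Variable mu : (R -> Prop) -> R.
Hypothesis Hm : is_prob_measure mu.

Lemma const_sum_zero (m : R) : infinite_sum (fun _ => m) m -> m = 0.
Proof.
  intros H. destruct (Req_dec m 0) as [|Hne]; auto. exfalso.
  assert (Hp : 0 < Rabs m) by (apply Rabs_pos_lt; auto).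
  destruct (H (Rabs m) Hp) as [N HN].
  specialize (HN (S N) (Nat.le_succ_diag_r N)). unfold R_dist in HN.
  rewrite sum_cte in HN.
  replace (m * INR (S (S N)) - m) with (m * INR (S N)) in HN by (rewrite !S_INR; ring).
  rewrite Rabs_mult, (Rabs_pos_eq (INR (S N))) in HN by apply pos_INR.
  rewrite S_INR in HN. pose proof (pos_INR N). nra.
Qed.

Lemma mu_empty : mu (fun _ => False) = 0.
Proof.
  destruct Hm as [_ [_ Hadd]].
  specialize (Hadd (fun _ => fun _ => False) (fun _ => borel_F) (fun _ _ _ _ H _ => H)).
  simpl in Hadd.
  assert (E : (fun x : R => exists _ : nat, False) = (fun _ => False)).
  { apply set_ext. intros x; split; [intros [_ []]|tauto]. }
  rewrite E in Hadd. apply const_sum_zero; exact Hadd.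
Qed.

Lemma mu_add2 A B : borel A -> borel B -> (forall x, A x -> B x -> False) ->
  mu (fun x => A x \/ B x) = mu A + mu B.
Proof.
  intros HA HB Hd. pose proof Hm as [_ [_ Hadd]].
  specialize (Hadd (seq2 A B)).
  assert (Hb : forall n, borel (seq2 A B n)) by (intros [|[|n]]; simpl; auto; apply borel_F).
  assert (Hdis : forall n m x, n <> m -> seq2 A B n x -> seq2 A B m x -> False).
  { intros [|[|n]] [|[|m]] x Hnm; simpl; try tauto; try (intros; eapply Hd; eauto); lia. }
  specialize (Hadd Hb Hdis).
  assert (E : (fun x => exists n, seq2 A B n x) = (fun x => A x \/ B x)).
  { apply set_ext. intros x; split.
    - intros [[|[|n]] H]; simpl in H; tauto.
    - intros [H|H]; [exists 0%nat|exists 1%nat]; exact H. }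
  rewrite E in Hadd. apply (uniqueness_sum _ _ _ Hadd).
  intros eps Heps. exists 1%nat. intros n Hn.
  assert (Hs : forall k, sum_f_R0 (fun n => mu (seq2 A B n)) (S k) = mu A + mu B).
  { induction k as [|k IH].
    - simpl. ring.
    - rewrite tech5, IH. simpl. rewrite mu_empty. ring. }
  destruct n as [|n]; [lia|]. rewrite Hs. unfold R_dist. rewrite Rminus_diag, Rabs_R0. lra.
Qed.

Lemma mu_pos A : borel A -> 0 <= mu A.
Proof. destruct Hm as [H _]. apply H. Qed.

Lemma mu_mono A B : borel A -> borel B -> (forall x, A x -> B x) -> mu A <= mu B.
Proof.
  intros HA HB Hs.
  assert (E : B = (fun x => A x \/ (B x /\ ~ A x))).
  { apply set_ext. intros x. split; [|intros [H|[H _]]; auto].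
    intros H. destruct (classic (A x)); tauto. }
  rewrite E, mu_add2; auto.
  - pose proof (mu_pos (borel_and HB (borel_C HA))). lra.
  - apply borel_and; auto. apply borel_C; auto.
  - intros x H [_ H']. tauto.
Qed.

Lemma mu_T : mu (fun _ => True) = 1.
Proof. destruct Hm as [_ [H _]]. exact H. Qed.

Lemma mu_le1 A : borel A -> mu A <= 1.
Proof. intros HA. rewrite <- mu_T. apply mu_mono; auto. apply borel_T. Qed.

Lemma mu_compl A : borel A -> mu A + mu (fun x => ~ A x) = 1.
Proof.
  intros HA. rewrite <- mu_add2; auto. 2: apply borel_C; auto.
  rewrite <- mu_T. f_equal. apply set_ext. intros x. split; [tauto|]. intros _. apply classic.
Qed.

Definition dseq (n : nat) : R -> Prop :=
  match n with 0 => fun x => x < 0 | S k => fun x => INR k <= x < INR k + 1 end.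

Lemma tight0 (eps : R) : 0 < eps -> exists N : nat, mu (fun x => INR N <= x) < eps.
Proof.
  intros Heps. pose proof Hm as [_ [_ Hadd]].
  assert (Hb : forall n, borel (dseq n)).
  { intros [|n]; simpl. apply borel_lt. apply borel_and; [apply borel_ge|apply borel_lt]. }
  assert (Hdis : forall n m x, n <> m -> dseq n x -> dseq m x -> False).
  { intros [|n] [|m] x Hnm; simpl; intros H1 H2;
      [lia | pose proof (pos_INR m); lra | pose proof (pos_INR n); lra | ].
    destruct (Nat.lt_total n m) as [Hl|[He|Hl]].
    - assert (INR (S n) <= INR m) as H by (apply le_INR; lia). rewrite S_INR in H. lra.
    - subst; lia.
    - assert (INR (S m) <= INR n) as H by (apply le_INR; lia). rewrite S_INR in H. lra. }
  specialize (Hadd dseq Hb Hdis).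
  assert (E : (fun x => exists n, dseq n x) = (fun _ => True)).
  { apply set_ext. intros x; split; [tauto|]. intros _.
    destruct (Rlt_le_dec x 0) as [H|H]. exists 0%nat; exact H.
    destruct (nat_big x) as [m Hm']. destruct (@floor_ex m x) as [k Hk]; [lra|].
    exists (S k). exact Hk. }
  rewrite E, mu_T in Hadd.
  assert (Hs : forall n, sum_f_R0 (fun n => mu (dseq n)) n = mu (fun x => x < INR n)).
  { induction n as [|n IH].
    - simpl. f_equal.
    - rewrite tech5, IH. simpl dseq. rewrite <- mu_add2.
      + f_equal. apply set_ext. intros x. rewrite S_INR. split; [intros [Hx|Hx]; lra|].
        intros Hx. destruct (Rlt_le_dec x (INR n)); [left|right]; lra.
      + apply borel_lt.
      + apply borel_and; [apply borel_ge|apply borel_lt].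
      + intros x; lra. }
  destruct (Hadd eps Heps) as [N HN]. exists N. specialize (HN N (le_n N)).
  rewrite Hs in HN. unfold R_dist in HN.
  pose proof (mu_compl (borel_lt (INR N))).
  assert (E2 : (fun x => ~ x < INR N) = (fun x => INR N <= x)).
  { apply set_ext. intros x; split; intros; lra. }
  simpl in H. rewrite E2 in H. apply Rabs_def2 in HN. lra.
Qed.

Lemma tight (eps c : R) : 0 < eps -> exists M, c <= M /\ mu (fun x => M < x) < eps.
Proof.
  intros Heps. destruct (tight0 Heps) as [N HN]. exists (Rmax c (INR N)). split.
  apply Rmax_l. apply Rle_lt_trans with (2 := HN). apply mu_mono.
  apply borel_gt. apply borel_ge. intros x Hx. pose proof (Rmax_r c (INR N)). lra.
Qed.

Lemma closed_tail_approx (c M : R) : c <= M ->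
  mu (fun x => c <= x) = mu (fun x => c <= x <= M) + mu (fun x => M < x).
Proof.
  intros HcM. rewrite <- mu_add2.
  - f_equal. apply set_ext. intros x. split; [|intros [Hx|Hx]; lra]. intros H.
    destruct (Rle_dec x M); [left|right]; lra.
  - apply borel_cc.
  - apply borel_gt.
  - intros x; lra.
Qed.

End Meas.

Lemma mink_half a1 b1 a2 b2 : a1 <= b1 -> a2 <= b2 ->
  mink (/2) (fun x => a1 <= x <= b1) (fun x => a2 <= x <= b2) =
  (fun z => (a1 + a2) / 2 <= z <= (b1 + b2) / 2).
Proof.
  intros H1 H2. apply set_ext. intros z. unfold mink. split.
  - intros [x [y [Hx [Hy Hz]]]]. rewrite Hz. lra.
  - intros Hz. set (d := z - (a1 + a2) / 2).
    exists (a1 + Rmin (2 * d) (b1 - a1)), (2 * z - (a1 + Rmin (2 * d) (b1 - a1))).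
    unfold Rmin; destruct (Rle_dec (2 * d) (b1 - a1)); unfold d in *; repeat split; lra.
Qed.

Lemma rpow_half u : 0 <= u -> rpow u (/2) = sqrt u.
Proof.
  intros Hu. unfold rpow. destruct (Rlt_dec 0 u).
  - apply Rpower_sqrt; auto.
  - assert (u = 0) by lra. subst. rewrite sqrt_0.
    destruct (Req_EM_T (/2) 0); [lra|reflexivity].
Qed.

Section LC.
Variable mu : (R -> Prop) -> R.
Hypothesis Hm : is_prob_measure mu.
Hypothesis Hlc : log_concave mu.
Hypothesis Hsym : symmetric mu.

Definition Hc (c : R) := mu (fun x => c <= x).

Lemma lc_half a1 b1 a2 b2 : a1 <= b1 -> a2 <= b2 ->
  mu (fun x => a1 <= x <= b1) * mu (fun x => a2 <= x <= b2) <=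
  (mu (fun x => (a1 + a2) / 2 <= x <= (b1 + b2) / 2))^2.
Proof.
  intros H1 H2.
  pose proof (@Hlc _ _ (/2) (compact_P3 a1 b1) (compact_P3 a2 b2)) as L.
  rewrite mink_half in L by auto.
  assert (E : 1 - /2 = /2) by lra. rewrite E in L.
  pose proof (mu_pos Hm (borel_cc a1 b1)) as P1.
  pose proof (mu_pos Hm (borel_cc a2 b2)) as P2.
  rewrite !rpow_half in L by auto.
  rewrite <- sqrt_mult in L by auto.
  assert (Hx : exists x, a1 <= x <= b1) by (exists a1; lra).
  assert (Hy : exists y, a2 <= y <= b2) by (exists a2; lra).
  specialize (L Hx Hy ltac:(lra)).
  set (m := mu (fun x => (a1 + a2) / 2 <= x <= (b1 + b2) / 2)) in *.
  set (P := mu (fun x => a1 <= x <= b1) * mu (fun x => a2 <= x <= b2)).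
  assert (HP : 0 <= P) by (unfold P; nra).
  pose proof (sqrt_pos P).
  rewrite <- (sqrt_sqrt P HP). simpl. rewrite Rmult_1_r.
  change (m >= sqrt P) in L. apply Rmult_le_compat; lra.
Qed.

Lemma Hc_mono c c' : c <= c' -> Hc c' <= Hc c.
Proof. intros H. apply (mu_mono Hm); [apply borel_ge|apply borel_ge|intros; lra]. Qed.

Lemma Hc_pos c : 0 <= Hc c.
Proof. apply (mu_pos Hm), borel_ge. Qed.

Lemma Hc_le1 c : Hc c <= 1.
Proof. apply (mu_le1 Hm), borel_ge. Qed.

Lemma H_double x : 0 <= x -> Hc 0 * Hc (2 * x) <= (Hc x)^2.
Proof.
  intros Hx.
  set (A := Hc 0). set (B := Hc (2 * x)). set (C := Hc x).
  assert (HBA : B <= A) by (apply Hc_mono; lra).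
  pose proof (Hc_pos (2 * x)) as HB0. pose proof (Hc_le1 0) as HA1. pose proof (Hc_pos x) as HC0.
  fold A B C in HB0, HA1, HC0.
  destruct (Req_dec B 0) as [HB|HB]. { rewrite HB. nra. }
  apply Rnot_lt_le. intros Hlt.
  set (e := Rmin B ((A * B - C ^ 2) / 4)).
  assert (He : 0 < e) by (unfold e; apply Rmin_glb_lt; lra).
  assert (HeB : e <= B) by apply Rmin_l.
  assert (HeC : e <= (A * B - C ^ 2) / 4) by apply Rmin_r.
  destruct (@tight mu Hm e (2 * x) He) as [M [HM Ht]].
  pose proof (@closed_tail_approx mu Hm 0 M ltac:(lra)) as E0.
  pose proof (@closed_tail_approx mu Hm (2 * x) M ltac:(lra)) as E2.
  fold (Hc 0) A in E0. fold (Hc (2 * x)) B in E2.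
  pose proof (lc_half (a1 := 0) (b1 := M) (a2 := 2 * x) (b2 := M) ltac:(lra) ltac:(lra)) as L.
  assert (Em : (fun x0 => (0 + 2 * x) / 2 <= x0 <= (M + M) / 2) = (fun x0 => x <= x0 <= M)).
  { apply set_ext. intros y. split; intros; lra. }
  rewrite Em in L.
  assert (Hmx : mu (fun x0 => x <= x0 <= M) <= C).
  { apply (mu_mono Hm); [apply borel_cc|apply borel_ge|intros; lra]. }
  pose proof (mu_pos Hm (borel_cc x M)).
  assert (Hsq : (mu (fun x0 => x <= x0 <= M))^2 <= C^2) by (simpl; nra).
  assert (L1 : (A - e) * (B - e) <= mu (fun x0 => 0 <= x0 <= M) * mu (fun x0 => 2 * x <= x0 <= M)).
  { apply Rmult_le_compat; lra. }
  nra.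
Qed.

Lemma sym_tail c : mu (fun x => x <= - c) = Hc c.
Proof.
  unfold Hc. rewrite <- (Hsym (borel_ge c)). f_equal. apply set_ext. intros y; split; intros; lra.
Qed.

Lemma H0_half : / 2 <= Hc 0.
Proof.
  pose proof (mu_add2 Hm (borel_ge 0) (borel_lt 0) (fun x H1 H2 => ltac:(lra))) as E.
  assert (ET : (fun x => 0 <= x \/ x < 0) = (fun _ => True)).
  { apply set_ext. intros y; split; [tauto|]. intros _. destruct (Rle_dec 0 y); [left|right]; lra. }
  simpl in E. rewrite ET, (mu_T Hm) in E.
  assert (mu (fun x => x < 0) <= mu (fun x => x <= - 0)).
  { apply (mu_mono Hm); [apply borel_lt|apply borel_le|intros; lra]. }
  rewrite sym_tail in H. unfold Hc in *. lra.
Qed.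

Lemma abs_tail c : 0 < c -> mu (fun x => c <= Rabs x) = 2 * Hc c.
Proof.
  intros Hc0.
  assert (E : (fun x => c <= Rabs x) = (fun x => c <= x \/ x <= - c)).
  { apply set_ext. intros y. unfold Rabs; destruct Rcase_abs; split; intros; try lra.
    }
  rewrite E, (mu_add2 Hm (borel_ge c) (borel_le (-c))).
  - rewrite sym_tail. unfold Hc. ring.
  - intros; lra.
Qed.

Lemma geo_tail s : 0 < s -> forall k : nat,
  mu (fun x => 2 ^ k * s <= Rabs x) <= (2 * Hc s) ^ (S k).
Proof.
  intros Hs.
  assert (Hh : forall k, Hc (2 ^ k * s) <= (2 * Hc s) ^ k * Hc s).
  { induction k as [|k IH].
    - simpl. rewrite Rmult_1_l. lra.
    - pose proof (H_double (x := 2 ^ k * s)) as D.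
      assert (Hk : 0 < 2 ^ k) by (apply pow_lt; lra).
      specialize (D ltac:(nra)).
      replace (2 * (2 ^ k * s)) with (2 ^ S k * s) in D by (simpl; ring).
      pose proof H0_half.
      pose proof (Hc_pos (2 ^ k * s)). pose proof (Hc_pos (2 ^ S k * s)).
      pose proof (Hc_pos 0). pose proof (Hc_pos s).
      assert (Hmk : Hc (2 ^ k * s) <= Hc s) by (apply Hc_mono; assert (1 <= 2 ^ k) by (apply pow_R1_Rle; lra); nra).
      assert (Hst : Hc (2 ^ S k * s) <= 2 * (Hc (2 ^ k * s))^2).
      { apply Rmult_le_reg_l with (Hc 0); [lra|].
        apply Rle_trans with ((Hc (2 ^ k * s))^2); [lra|]. nra. }
      simpl (_ ^ S k). simpl in Hst.
      assert (0 <= (2 * Hc s) ^ k) by (apply pow_le; lra).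
      nra. }
  intros k. rewrite abs_tail by (assert (0 < 2 ^ k) by (apply pow_lt; lra); nra).
  simpl. specialize (Hh k). lra.
Qed.

End LC.
Unset Implicit Arguments.

Lemma adapted_transfer (g h : R -> R) (a b : R) (l lf : list R) :
  adapted_couple g a b l lf -> a <= b -> (forall x, a < x < b -> g x = h x) ->
  adapted_couple h a b l lf.
Proof.
  intros [Hord [H0 [Hl [Hlen Hc]]]] Hab E.
  split; [exact Hord|]. split; [exact H0|]. split; [exact Hl|]. split; [exact Hlen|].
  intros i Hi x Hx. rewrite <- E. apply (Hc i Hi x Hx).
  unfold Rmin, Rmax in *. destruct (Rle_dec a b); [|lra].
  destruct (RList_P6 l) as [P _]. specialize (P Hord).
  unfold open_interval in Hx.
  assert (pos_Rl l 0 <= pos_Rl l i) by (apply P; lia).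
  assert (pos_Rl l (S i) <= pos_Rl l (pred (length l))) by (apply P; lia).
  lra.
Qed.

Definition sf_transfer (g h : R -> R) (a b : R) (Hab : a <= b)
  (E : forall x, a < x < b -> g x = h x) (pr : IsStepFun g a b) : IsStepFun h a b :=
  match pr with existT _ l (existT _ lf H) =>
    existT _ l (existT _ lf (@adapted_transfer g h a b l lf H Hab E)) end.

Arguments sf_transfer {g h a b} Hab E pr.

Lemma sf_transfer_int g h a b Hab E pr :
  RiemannInt_SF (mkStepFun (@sf_transfer g h a b Hab E pr)) = RiemannInt_SF (mkStepFun pr).
Proof.
  destruct pr as [l [lf H]]. unfold RiemannInt_SF, subdivision, subdivision_val. simpl.
  reflexivity.
Qed.

Section Mono.
Variable f : R -> R.
Hypothesis Hf : forall x y, x <= y -> f y <= f x.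

Lemma mono_build (w : R) (n : nat) : forall (a b : R), 0 <= w -> b = a + INR n * w ->
  {phi : R -> R & {psi : R -> R & {prphi : IsStepFun phi a b & {prpsi : IsStepFun psi a b |
    (forall t, a <= t <= b -> Rabs (f t - phi t) <= psi t) /\
    0 <= RiemannInt_SF (mkStepFun prpsi) <= w * (f a - f b)}}}}.
Proof.
  induction n as [|n IH]; intros a b Hw Hb.
  - simpl in Hb. exists (fct_cte (f a)), (fct_cte 0), (StepFun_P4 a b (f a)), (StepFun_P4 a b 0).
    rewrite StepFun_P18. split.
    + intros t Ht. unfold fct_cte. replace t with a by lra. replace b with a by lra.
      rewrite Rminus_diag, Rabs_R0. lra.
    + replace b with a by lra. rewrite Rminus_diag. lra.
  - set (c := a + w).
    assert (Hac : a <= c) by (unfold c; lra).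
    assert (Hcb : c <= b) by (pose proof (pos_INR n); rewrite S_INR in Hb; unfold c; nra).
    destruct (IH c b Hw) as [phi1 [psi1 [prphi1 [prpsi1 [Hp1 Hi1]]]]].
    { rewrite S_INR in Hb; unfold c; lra. }
    set (phi := fun x => if Rle_dec x c then f a else phi1 x).
    set (psi := fun x => if Rle_dec x c then f a - f c else psi1 x).
    assert (E1 : forall x, a < x < c -> fct_cte (f a) x = phi x).
    { intros x Hx. unfold phi, fct_cte. destruct (Rle_dec x c); [reflexivity|lra]. }
    assert (E2 : forall x, c < x < b -> phi1 x = phi x).
    { intros x Hx. unfold phi. destruct (Rle_dec x c); [lra|reflexivity]. }
    assert (E3 : forall x, a < x < c -> fct_cte (f a - f c) x = psi x).
    { intros x Hx. unfold psi, fct_cte. destruct (Rle_dec x c); [reflexivity|lra]. }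
    assert (E4 : forall x, c < x < b -> psi1 x = psi x).
    { intros x Hx. unfold psi. destruct (Rle_dec x c); [lra|reflexivity]. }
    pose (q1 := sf_transfer Hac E3 (StepFun_P4 a c (f a - f c))).
    pose (q2 := sf_transfer Hcb E4 prpsi1).
    pose (prpsi := StepFun_P46 q1 q2).
    exists phi, psi,
      (StepFun_P46 (sf_transfer Hac E1 (StepFun_P4 a c (f a)))
                   (sf_transfer Hcb E2 prphi1)), prpsi.
    split.
    + intros t Ht. unfold phi, psi. destruct (Rle_dec t c).
      * assert (f c <= f t) by (apply Hf; lra). assert (f t <= f a) by (apply Hf; lra).
        rewrite Rabs_left1; lra.
      * apply Hp1; lra.
    + rewrite <- (StepFun_P43 q1 q2 prpsi). unfold q1, q2. rewrite !sf_transfer_int.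
      rewrite StepFun_P18.
      assert (f c <= f a) by (apply Hf; lra). assert (f b <= f c) by (apply Hf; lra).
      replace (c - a) with w by (unfold c; lra). nra.
Qed.

Lemma mono_integrable (a b : R) : a <= b -> Riemann_integrable f a b.
Proof.
  intros Hab eps.
  assert (Hfab : f b <= f a) by (apply Hf; lra).
  destruct (nat_big ((b - a) * (f a - f b) / eps)) as [n0 Hn0].
  set (n := S n0).
  assert (Hn : 0 < INR n) by (unfold n; rewrite S_INR; pose proof (pos_INR n0); lra).
  set (w := (b - a) / INR n).
  assert (Hw : 0 <= w) by (unfold w; apply Rmult_le_pos; [lra|left; apply Rinv_0_lt_compat; lra]).
  destruct (mono_build w n a b Hw) as [phi [psi [prphi [prpsi [Hp Hi]]]]].
  { unfold w. field. lra. }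
  exists (mkStepFun prphi), (mkStepFun prpsi). split.
  - intros t Ht. unfold Rmin, Rmax in Ht. destruct (Rle_dec a b); [|lra]. apply Hp; exact Ht.
  - rewrite Rabs_pos_eq by lra.
    apply Rle_lt_trans with (w * (f a - f b)); [lra|].
    unfold w. assert (Heps := cond_pos eps).
    assert (INR n0 < INR n) by (unfold n; rewrite S_INR; lra).
    apply Rmult_lt_reg_r with (INR n); [lra|].
    replace ((b - a) / INR n * (f a - f b) * INR n) with ((b - a) * (f a - f b)) by (field; lra).
    apply (Rmult_lt_compat_r eps) in Hn0; [|lra].
    replace ((b - a) * (f a - f b) / eps * eps) with ((b - a) * (f a - f b)) in Hn0 by (field; lra).
    nra.
Qed.
End Mono.

Lemma Rpower_pos' x y : 0 < Rpower x y.
Proof. unfold Rpower. apply exp_pos. Qed.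

Lemma powp_nonneg u p : 0 <= powp u p.
Proof. unfold powp. destruct (Rlt_dec 0 u); [left; apply Rpower_pos'|lra]. Qed.

Lemma powp_mono p u u' : 0 < p -> 0 <= u <= u' -> powp u p <= powp u' p.
Proof.
  intros Hp Hu. unfold powp. destruct (Rlt_dec 0 u); destruct (Rlt_dec 0 u').
  - apply Rle_Rpower_l; lra.
  - lra.
  - left; apply Rpower_pos'.
  - lra.
Qed.

Lemma powp_pos u p : 0 < u -> powp u p = Rpower u p.
Proof. intros H. unfold powp. destruct (Rlt_dec 0 u); [reflexivity|lra]. Qed.

Lemma Rpower_2pow n s p : 0 < s -> Rpower (2 ^ n * s) p = (Rpower 2 p) ^ n * Rpower s p.
Proof.
  intros Hs. rewrite <- Rpower_mult_distr by (try apply pow_lt; lra).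
  f_equal. rewrite <- (@Rpower_pow n (Rpower 2 p) (Rpower_pos' 2 p)).
  rewrite <- (@Rpower_pow n 2) by lra. rewrite !Rpower_mult. f_equal. ring.
Qed.

Lemma INR_le_pow2 n : INR n <= 2 ^ n.
Proof.
  induction n as [|n IH]. simpl; lra. rewrite S_INR. simpl.
  assert (1 <= 2 ^ n) by (apply pow_R1_Rle; lra). lra.
Qed.

Theorem lemma3p2 (mu : (R -> Prop) -> R) (p V : R) :
  is_prob_measure mu -> log_concave mu -> symmetric mu ->
  2 <= p -> 0 < V ->
  expect_ge mu (fun y => powp (Rabs y) p) (powp V p) ->
  expect_ge mu (fun y => powp (Rmin (Rabs y) V) p) (powp (V / 12) p).
Proof.
  intros Hm Hlc Hsym Hp HV Hhyp c' Hc'.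
  apply NNPP. intros Hno.
  assert (Hall : forall T (pr : Riemann_integrable (fun t => mu (fun y => t < powp (Rmin (Rabs y) V) p)) 0 T),
            0 <= T -> RiemannInt pr <= c').
  { intros T pr HT. apply Rnot_lt_le. intros Hlt. apply Hno. exists T, pr. split; auto. }
  set (A := Rpower 2 p).
  set (W := Rpower (V / 12) p).
  set (R6 := Rpower 6 p).
  set (s := V / 2).
  set (Sv := Rpower s p).
  set (h0 := Hc mu s).
  assert (HA4 : 4 <= A).
  { unfold A. replace 4 with (Rpower 2 (INR 2)) by (rewrite Rpower_pow by lra; simpl; ring).
    apply Rle_Rpower; [lra|simpl; lra]. }
  assert (HR6 : 4 * A <= R6).
  { unfold R6, A. replace 6 with (3 * 2) by ring. rewrite <- Rpower_mult_distr by lra.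
    assert (4 <= Rpower 3 p).
    { replace 4 with (Rpower 2 (INR 2)) by (rewrite Rpower_pow by lra; simpl; ring).
      apply Rle_trans with (Rpower 3 (INR 2)).
      - rewrite !Rpower_pow by lra. simpl; lra.
      - apply Rle_Rpower; [lra|simpl; lra]. }
    pose proof (Rpower_pos' 2 p). nra. }
  assert (HS : Sv = W * R6).
  { unfold Sv, W, R6, s. rewrite Rpower_mult_distr by lra. f_equal. field. }
  assert (HW : 0 < W) by apply Rpower_pos'.
  assert (HSpos : 0 < Sv) by apply Rpower_pos'.
  assert (Hf2mono : forall x y, x <= y ->
     mu (fun z => y < powp (Rmin (Rabs z) V) p) <= mu (fun z => x < powp (Rmin (Rabs z) V) p)).
  { intros x y Hxy. apply (mu_mono Hm).
    - apply (@borel_abs_up (fun u => y < powp (Rmin u V) p)). intros u u' Hu Hpu.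
      eapply Rlt_le_trans; [exact Hpu|]. apply powp_mono; [lra|].
      split. apply Rmin_glb; lra. apply Rle_min_compat_r; lra.
    - apply (@borel_abs_up (fun u => x < powp (Rmin u V) p)). intros u u' Hu Hpu.
      eapply Rlt_le_trans; [exact Hpu|]. apply powp_mono; [lra|].
      split. apply Rmin_glb; lra. apply Rle_min_compat_r; lra.
    - intros z Hz. lra. }
  assert (Hstep1 : h0 * Sv <= c').
  { pose proof (@mono_integrable (fun t => mu (fun y => t < powp (Rmin (Rabs y) V) p)) Hf2mono 0 Sv ltac:(lra)) as pr.
    apply Rle_trans with (RiemannInt pr); [|apply Hall; lra].
    replace (h0 * Sv) with (RiemannInt (RiemannInt_P14 0 Sv h0)) by (rewrite RiemannInt_P15; ring).
    apply RiemannInt_P19; [lra|]. intros t Ht. unfold fct_cte, h0, Hc.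
    apply (mu_mono Hm).
    - apply borel_ge.
    - apply (@borel_abs_up (fun u => t < powp (Rmin u V) p)). intros u u' Hu Hpu.
      eapply Rlt_le_trans; [exact Hpu|]. apply powp_mono; [lra|].
      split. apply Rmin_glb; lra. apply Rle_min_compat_r; lra.
    - intros y Hy. apply Rlt_le_trans with Sv; [lra|].
      unfold Sv. rewrite <- powp_pos by (unfold s; lra). apply powp_mono; [lra|].
      split; [unfold s; lra|]. unfold Rmin; destruct Rle_dec; unfold Rabs in *; destruct Rcase_abs; unfold s in *; lra. }
  assert (Hc'W : c' < W) by (unfold W; rewrite <- (@powp_pos (V / 12) p) by lra; exact Hc').
  assert (Hh0 : 0 <= h0) by apply (@Hc_pos mu Hm).
  assert (Hrho : 2 * h0 * A <= / 2).
  { rewrite HS in Hstep1. assert (h0 * R6 < 1) by nra. nra. }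
  set (g := fun t => mu (fun y => t < powp (Rabs y) p)).
  assert (Hgb : forall t, borel (fun y => t < powp (Rabs y) p)).
  { intros t. apply (@borel_abs_up (fun u => t < powp u p)). intros u u' Hu Hpu.
    eapply Rlt_le_trans; [exact Hpu|]. apply powp_mono; lra. }
  assert (Hind : forall n T (pr : Riemann_integrable g 0 T), 0 <= T -> T <= A ^ n * Sv ->
            RiemannInt pr <= 2 * Sv - Sv * (/ 2) ^ n).
  { induction n as [|n IH]; intros T pr HT HTn.
    - simpl in HTn |- *. rewrite Rmult_1_l in HTn.
      apply Rle_trans with (RiemannInt (RiemannInt_P14 0 T 1)).
      + apply RiemannInt_P19; [lra|]. intros t Ht. unfold g, fct_cte. apply (mu_le1 Hm). apply Hgb.
      + rewrite RiemannInt_P15. lra.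
    - set (tn := A ^ n * Sv).
      assert (Htn0 : 0 <= tn) by (unfold tn; pose proof (pow_le A n ltac:(lra)); nra).
      assert (Hhalf : 0 < (/ 2) ^ n) by (apply pow_lt; lra).
      destruct (Rle_dec T tn) as [HTle|HTgt].
      + specialize (IH T pr HT HTle). replace ((/2)^(S n)) with (/2 * (/2)^n) by reflexivity.
        assert (0 < Sv * (/2)^n) by nra. lra.
      + pose proof (RiemannInt_P22 pr (conj Htn0 (Rlt_le _ _ (Rnot_le_lt _ _ HTgt)))) as pr1.
        pose proof (RiemannInt_P23 pr (conj Htn0 (Rlt_le _ _ (Rnot_le_lt _ _ HTgt)))) as pr2.
        rewrite <- (RiemannInt_P26 pr1 pr2 pr).
        specialize (IH tn pr1 Htn0 (Rle_refl _)).
        set (tau := mu (fun x => 2 ^ n * s <= Rabs x)).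
        assert (Htau : tau <= (2 * h0) ^ (S n)) by (apply (@geo_tail mu Hm Hlc Hsym); unfold s; lra).
        assert (Htau0 : 0 <= tau).
        { apply (mu_pos Hm). apply (@borel_abs_up (fun u => 2 ^ n * s <= u)). intros; lra. }
        assert (Hi2 : RiemannInt pr2 <= tau * (T - tn)).
        { replace (tau * (T - tn)) with (RiemannInt (RiemannInt_P14 tn T tau)) by (rewrite RiemannInt_P15; ring).
          apply RiemannInt_P19; [lra|]. intros t Ht. unfold g, fct_cte, tau.
          apply (mu_mono Hm); [apply Hgb| apply (@borel_abs_up (fun u => 2 ^ n * s <= u)); intros; lra|].
          intros y Hy. apply Rnot_lt_le. intros Hlt.
          assert (powp (Rabs y) p <= tn).
          { unfold tn, Sv, A. rewrite <- Rpower_2pow by (unfold s; lra).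
            rewrite <- powp_pos by (assert (0 < 2 ^ n) by (apply pow_lt; lra); unfold s; nra).
            apply powp_mono; [lra|]. split; [apply Rabs_pos|lra]. }
          lra. }
        assert (Hb : tau * (T - tn) <= Sv * (/ 2) ^ (S n)).
        { apply Rle_trans with (tau * (A ^ (S n) * Sv)).
          { apply Rmult_le_compat_l; auto. unfold tn in *. lra. }
          apply Rle_trans with ((2 * h0) ^ (S n) * (A ^ (S n) * Sv)).
          { apply Rmult_le_compat_r; auto. pose proof (pow_le A (S n) ltac:(lra)). nra. }
          rewrite <- Rmult_assoc, <- Rpow_mult_distr, Rmult_comm.
          apply Rmult_le_compat_l; [lra|]. apply pow_incr. nra. }
        simpl in Hb |- *. lra. }
  assert (HU : powp V p = A * Sv).
  { rewrite powp_pos by lra. unfold A, Sv, s. rewrite Rpower_mult_distr by lra. f_equal. field. }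
  destruct (Hhyp (powp V p * (3 / 4))) as [T [pr [HT Hlt]]].
  { rewrite HU. nra. }
  destruct (nat_big (T / Sv)) as [n Hn].
  assert (HTn : T <= A ^ n * Sv).
  { assert (INR n <= A ^ n).
    { apply Rle_trans with (2 ^ n). apply INR_le_pow2. apply pow_incr. lra. }
    assert (T < INR n * Sv).
    { apply (Rmult_lt_compat_r Sv) in Hn; auto. unfold Rdiv in Hn.
      rewrite Rmult_assoc, Rinv_l, Rmult_1_r in Hn by lra. exact Hn. }
    nra. }
  pose proof (Hind n T pr HT HTn).
  assert (0 < (/ 2) ^ n) by (apply pow_lt; lra).
  rewrite HU in Hlt. unfold g in *. assert (0 < Sv * (/ 2) ^ n) by nra. assert (4 * Sv <= A * Sv) by nra. lra.
Qed.
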